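(* For integers $m\ge1$ and $0\le k\le m$, the circle-valued Morse function $f\colon K_{m,k}\to S^1$ induces a short exact sequence $1\to F_{m+k}\to G_{m,k}\to\mathbb Z\to1$, where $F_{m+k}$ is a free group of rank $m+k$ (and the map $G_{m,k}\to\mathbb Z$ sends every generator $a_i$ to a fixed generator of $\mathbb Z$).
   Context: $G_{m,k}=\langle a_1,\dots,a_{m+k+1}\mid [a_i,a_{i+1}]=1\ (1\le i\le m),\ a_{m+j+1}^{-1}a_ja_{m+j+1}=a_{m+j}\ (1\le j\le k)\rangle$, and $K_{m,k}$ is its presentation $2$–complex (one $0$–cell, one $1$–cell per generator, one square per relator). Give $S^1$ the CW structure with one $0$–cell and one $1$–cell; $f$ sends the $0$–cell of $K_{m,k}$ to the $0$–cell of $S^1$, maps each $1$–cell homeomorphically onto the $1$–cell of $S^1$ (in its orientation), and extends linearly over the square $2$–cells (so that its lift to universal covers is a Morse function whose value on each square is affine). *)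

(* Defs.v *)
(* Groups are MathComp's (possibly infinite) [groupType]
   from boot/monoid.v; group presentations and free groups are given by
   their universal properties. *)
From HB Require Import structures.
From mathcomp Require Import all_boot all_order all_algebra.
Set Implicit Arguments. Unset Strict Implicit. Unset Printing Implicit Defensive.

Definition is_ghom (G H : groupType) (f : G -> H) : Prop :=
  forall x y : G, f (x * y)%g = (f x * f y)%g.

Definition is_ghom_on (G H : groupType) (N : G -> Prop) (f : G -> H) : Prop :=
  forall x y : G, N x -> N y -> f (x * y)%g = (f x * f y)%g.

(* the relators of G_{m,k} evaluated on b_1, ..., b_{m+k+1} (1-based) :
   [b_i, b_{i+1}] = 1 (1 <= i <= m) and
   b_{m+j+1}^{-1} b_j b_{m+j+1} = b_{m+j} (1 <= j <= k),
   with [x,y] = x^{-1} y^{-1} x y. *)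
Definition Gmk_relations (m k : nat) (H : groupType) (b : nat -> H) : Prop :=
  (forall i : nat, (1 <= i <= m)%N ->
     ((b i)^-1 * (b i.+1)^-1 * b i * b i.+1)%g = 1%g) /\
  (forall j : nat, (1 <= j <= k)%N ->
     ((b (m + j + 1)%N)^-1 * b j * b (m + j + 1)%N)%g = b (m + j)%N).

Definition presents_Gmk (m k : nat) (G : groupType) (a : nat -> G) : Prop :=
  Gmk_relations m k a /\
  forall (H : groupType) (b : nat -> H), Gmk_relations m k b ->
    (exists f : G -> H, is_ghom f /\
        forall i, (1 <= i <= m + k + 1)%N -> f (a i) = b i) /\
    (forall f g : G -> H, is_ghom f -> is_ghom g ->
        (forall i, (1 <= i <= m + k + 1)%N -> f (a i) = g (a i)) ->
        forall u, f u = g u).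

Definition free_basis_of (G : groupType) (N : G -> Prop) (n : nat)
    (x : 'I_n -> G) : Prop :=
  (forall i, N (x i)) /\
  forall (H : groupType) (b : 'I_n -> H),
    (exists f : G -> H, is_ghom_on N f /\ forall i, f (x i) = b i) /\
    (forall f g : G -> H, is_ghom_on N f -> is_ghom_on N g ->
        (forall i, f (x i) = g (x i)) -> forall u, N u -> f u = g u).

(* Main.v *)
From HB Require Import structures.
From mathcomp Require Import all_boot all_order all_algebra zify.
Require Import Defs.
From mathcomp Require Import boolp.
Set Implicit Arguments. Unset Strict Implicit. Unset Printing Implicit Defensive.
Import GRing.Theory.
Local Open Scope group_scope.

Section Gam.
Variable H : groupType.
Definition Gam := ((int -> H) * int)%type.
HB.instance Definition _ := Choice.on Gam.
Definition gam_one : Gam := (fun _ => 1, 0%R).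
Definition gam_mul (x y : Gam) : Gam :=
  (fun n => x.1 n * y.1 (n + x.2)%R, (x.2 + y.2)%R).
Definition gam_inv (x : Gam) : Gam := (fun n => (x.1 (n - x.2)%R)^-1, (- x.2)%R).
Lemma gam_mulA : associative gam_mul.
Proof.
move=> [x1 x2] [y1 y2] [z1 z2]; rewrite /gam_mul /=; congr (_, _).
  by apply: funext => n; rewrite mulgA addrA.
by rewrite addrA.
Qed.
Lemma gam_mul1 : left_id gam_one gam_mul.
Proof. by move=> [x1 x2]; rewrite /gam_mul /=; congr (_,_); [apply: funext=> n; rewrite addr0 mul1g|rewrite add0r]. Qed.
Lemma gam_mulg1 : right_id gam_one gam_mul.
Proof. by move=> [x1 x2]; rewrite /gam_mul /=; congr (_,_); [apply: funext=> n; rewrite mulg1|rewrite addr0]. Qed.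
Lemma gam_mulV : left_inverse gam_one gam_inv gam_mul.
Proof. by move=> [x1 x2]; rewrite /gam_mul /=; congr (_,_); [apply: funext=> n; rewrite mulVg|rewrite addNr]. Qed.
Lemma gam_mulgV : right_inverse gam_one gam_inv gam_mul.
Proof. by move=> [x1 x2]; rewrite /gam_mul /=; congr (_,_); [apply: funext=> n; rewrite addrK mulgV|rewrite addrN]. Qed.
HB.instance Definition _ := isGroup.Build Gam gam_mulA gam_mul1 gam_mulg1 gam_mulV gam_mulgV.
End Gam.

Section Om.
Variable G : groupType.
Definition Om := ((G -> bool) * G)%type.
HB.instance Definition _ := Choice.on Om.
Definition om_one : Om := (fun _ => false, 1).
Definition om_mul (x y : Om) : Om :=
  (fun z => addb (x.1 z) (y.1 (z * x.2)), x.2 * y.2).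
Definition om_inv (x : Om) : Om := (fun z => x.1 (z * x.2^-1), x.2^-1).
Lemma om_mulA : associative om_mul.
Proof.
move=> [x1 x2] [y1 y2] [z1 z2]; rewrite /om_mul /=; congr (_, _).
  by apply: funext => n /=; rewrite mulgA addbA.
by rewrite mulgA.
Qed.
Lemma om_mul1 : left_id om_one om_mul.
Proof. by move=> [x1 x2]; rewrite /om_mul /=; congr (_,_); [apply: funext=> n; rewrite mulg1|rewrite mul1g]. Qed.
Lemma om_mulg1 : right_id om_one om_mul.
Proof. by move=> [x1 x2]; rewrite /om_mul /=; congr (_,_); [apply: funext=> n; rewrite addbF|rewrite mulg1]. Qed.
Lemma om_mulV : left_inverse om_one om_inv om_mul.
Proof. by move=> [x1 x2]; rewrite /om_mul /=; congr (_,_); [apply: funext=> n; rewrite /= addbb|rewrite mulVg]. Qed.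
Lemma om_mulgV : right_inverse om_one om_inv om_mul.
Proof. by move=> [x1 x2]; rewrite /om_mul /=; congr (_,_); [apply: funext=> n; rewrite /= mulgK addbb|rewrite mulgV]. Qed.
HB.instance Definition _ := isGroup.Build Om om_mulA om_mul1 om_mulg1 om_mulV om_mulgV.
End Om.

Lemma gam_mulE (H : groupType) (x y : Gam H) : (x * y)%g = gam_mul x y.
Proof. by []. Qed.
Lemma gam_invE (H : groupType) (x : Gam H) : (x^-1)%g = gam_inv x.
Proof. by []. Qed.
Section S.
Variable H : groupType.
Variables (u v : int -> H) (c : H).
Fixpoint wpos (n : nat) : H := match n with 0 => c | n'.+1 => (u n')^-1 * wpos n' * v n'.+1 end.
Fixpoint wneg (n : nat) : H := match n with 0 => c | n'.+1 => u (Negz n') * wneg n' * (v (- (Posz n'))%R)^-1 end.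
Definition wsol (z : int) : H := match z with Posz n => wpos n | Negz n => wneg n.+1 end.
Lemma wsol0 : wsol 0 = c. Proof. by []. Qed.
Lemma wsolN n : wsol (- Posz n)%R = wneg n.
Proof. by case: n. Qed.
Lemma wsolP z : u z * wsol (z + 1)%R = wsol z * v (z + 1)%R.
Proof.
case: z => n.
  have -> : (Posz n + 1 = Posz n.+1)%R by rewrite -addn1 PoszD.
  by rewrite /= !mulgA mulgV mul1g.
have -> : (Negz n + 1 = - Posz n)%R by rewrite NegzE; lia.
by rewrite wsolN /= mulgVK.
Qed.
End S.
Section Tab.
Variable H : groupType.
Variable m : nat.
Variable cc : nat -> H.
Definition pidx (i : nat) : nat := if (i <= m)%N then i else (i - m)%N.
Lemma pidx_le i : (pidx i <= i)%N.
Proof. by rewrite /pidx; case: ifP => // _; rewrite leq_subr. Qed.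
Lemma pidx_ge1 i : (1 <= i)%N -> (1 <= pidx i)%N.
Proof. by rewrite /pidx; case: ifP => // /negbT; rewrite -ltnNge subn_gt0. Qed.
Fixpoint gtab (i : nat) : nat -> int -> H :=
  match i with
  | 0 => fun _ _ => 1
  | i'.+1 => fun q => if (q <= i')%N || (i' == 0)%N then gtab i' q
             else wsol (gtab i' (pidx i')) (gtab i' i') (cc i'.+1)
  end.
Definition gg q := gtab q q.
Lemma gtab_stable i q : (q <= i)%N -> gtab i q = gg q.
Proof.
elim: i => [|i IH]; first by rewrite leqn0 => /eqP ->.
rewrite leq_eqVlt => /orP [/eqP -> //|]; rewrite ltnS => hq.
by rewrite /= hq /= IH.
Qed.
Lemma gg1 : gg 1 = fun _ => 1. Proof. by []. Qed.
Lemma ggS i : (1 <= i)%N -> gg i.+1 = wsol (gg (pidx i)) (gg i) (cc i.+1).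
Proof.
move=> hi; rewrite /gg /= ltnn /=.
have -> : (i == 0)%N = false by case: i hi.
by rewrite (gtab_stable (pidx_le i)) (gtab_stable (leqnn i)).
Qed.
Lemma gg_rel i z : (1 <= i)%N ->
  gg (pidx i) z * gg i.+1 (z + 1)%R = gg i.+1 z * gg i (z + 1)%R.
Proof. by move=> hi; rewrite ggS // wsolP. Qed.
Lemma gg_c i : (1 <= i)%N -> gg i.+1 0 = cc i.+1.
Proof. by move=> hi; rewrite ggS. Qed.
End Tab.

Section Hom.
Lemma ghom1 (G H : groupType) (f : G -> H) : is_ghom f -> f 1 = 1.
Proof.
move=> hf; have := hf 1 1; rewrite mulg1 => h.
by apply: (@mulgI _ (f 1)); rewrite mulg1 -h.
Qed.
Lemma ghomV (G H : groupType) (f : G -> H) x : is_ghom f -> f x^-1 = (f x)^-1.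
Proof.
move=> hf; apply/esym/mulg1_eq; rewrite -hf mulgV; exact: ghom1.
Qed.
Lemma rel_hom m k (G H : groupType) (f : G -> H) (a : nat -> G) :
  is_ghom f -> Gmk_relations m k a -> Gmk_relations m k (fun i => f (a i)).
Proof.
move=> hf [h1 h2]; split.
  by move=> i hi; rewrite -!ghomV // -!hf h1 // ghom1.
by move=> j hj; rewrite -!ghomV // -!hf h2.
Qed.
Lemma comm_of (G : groupType) (x y : G) : x * y = y * x -> x^-1 * y^-1 * x * y = 1.
Proof. by move=> E; rewrite -(mulgA _ x y) E !mulgA mulgVK mulVg. Qed.
Lemma of_comm (G : groupType) (x y : G) : x^-1 * y^-1 * x * y = 1 -> x * y = y * x.
Proof.
move=> E; rewrite -[y * x]mulg1 -E !mulgA mulgK mulgV mul1g //.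
Qed.
Lemma conj_of (G : groupType) (x y z : G) : x * y = y * z -> y^-1 * x * y = z.
Proof. by move=> E; rewrite -mulgA E mulKg. Qed.
Lemma of_conj (G : groupType) (x y z : G) : y^-1 * x * y = z -> x * y = y * z.
Proof. by move=> <-; rewrite !mulgA mulgV mul1g. Qed.
End Hom.

Lemma gam_comm (H : groupType) (u v w : int -> H) :
  (forall z, u z * w (z + 1)%R = w z * v (z + 1)%R) ->
  ((u, 1%R) : Gam H) * ((w, 1%R) : Gam H) = ((w, 1%R) : Gam H) * ((v, 1%R) : Gam H).
Proof. by move=> E; rewrite !gam_mulE /gam_mul /=; congr (_, _); apply: funext => z; rewrite E. Qed.

Section Gen.
Variables (m k : nat) (G : groupType) (a : nat -> G).
Hypothesis hG : presents_Gmk m k a.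

Lemma gen_ind (P : G -> Prop) : P 1 ->
  (forall u i, (1 <= i <= m + k + 1)%N -> P u -> P (u * a i) /\ P (u * (a i)^-1)) ->
  forall u, P u.
Proof.
move=> P1 hP u.
pose Pb z := `[< P z >].
pose f1 (u : G) : Om G := (fun _ => false, u).
pose f2 (u : G) : Om G := (fun z => Pb z (+) Pb (z * u), u).
have hf1 : is_ghom f1 by move=> x y.
have hf2 : is_ghom f2.
  move=> x y; rewrite /f2 /= /om_mul /=; congr (_, _); apply: funext => z /=.
  by rewrite mulgA; case: (Pb z); case: (Pb (z * x)); case: (Pb (z * x * y)).
case: hG => hrel hU.
have := (hU _ _ (rel_hom hf1 hrel)).2 f1 f2 hf1 hf2.
have agree : forall i, (1 <= i <= m + k + 1)%N -> f1 (a i) = f2 (a i).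
  move=> i hi; rewrite /f1 /f2; congr (_, _); apply: funext => z.
  rewrite /Pb; case: (asboolP (P z)) => hz; case: (asboolP (P (z * a i))) => hza //.
  - by case: hza; exact: (hP z i hi hz).1.
  - by case: hz; have := (hP _ i hi hza).2; rewrite mulgK.
move=> /(_ agree u) /(congr1 (fun p => p.1 1)) /=.
rewrite /Pb mul1g; case: (asboolP (P 1)) => // _.
by case: (asboolP (P u)).
Qed.
End Gen.

Section Ident.
Variable G : groupType.
Lemma ident1 (t ap al al1 : G) : ap * al = al * al1 ->
  t * (al * t^-1) * t^-1 = (ap * t^-1)^-1 * (al * t^-1) * (t * (al1 * t^-1) * t^-1).
Proof.
move=> E; rewrite !invgM !invgK !mulgA mulgVK.
by rewrite -(mulgA _ al al1) -E mulgA mulgVK.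
Qed.
Lemma ident2 (t ap al al1 : G) : ap * al = al * al1 ->
  t^-1 * (al * t^-1) * t = t^-1 * (ap * t^-1) * t * (al * t^-1) * (al1 * t^-1)^-1.
Proof.
move=> E; rewrite !invgM !invgK !mulgA !mulgVK.
by rewrite -(mulgA _ ap al) E mulgA mulgK.
Qed.
Lemma ident3 (w e y t : G) : w * e * (y * t) = w * (e * y * e^-1) * (e * t).
Proof. by rewrite !mulgA mulgVK. Qed.
Lemma ident4 (w e y t : G) :
  w * e * (y * t)^-1 = w * ((e * t^-1) * y^-1 * (e * t^-1)^-1) * (e * t^-1).
Proof. by rewrite !invgM !invgK !mulgA mulgVK mulgK. Qed.
End Ident.

Section Main.
Variables (m k : nat) (G : groupType) (a : nat -> G).
Hypothesis hG : presents_Gmk m k a.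
Variable phi : G -> int.
Hypothesis hphi : forall x y, phi (x * y) = (phi x + phi y)%R.
Hypothesis hphia : forall i, (1 <= i <= m + k + 1)%N -> phi (a i) = 1%R.

Definition xb (o : 'I_(m + k)) : G := a o.+2 * (a 1)^-1.

Lemma phi1 : phi 1 = 0%R.
Proof. have := hphi 1 1; rewrite mulg1; lia. Qed.
Lemma phiV x : phi x^-1 = (- phi x)%R.
Proof. have := hphi x x^-1; rewrite mulgV phi1; lia. Qed.
Lemma phixb o : phi (xb o) = 0%R.
Proof.
rewrite /xb hphi phiV !hphia //; first lia.
by have := ltn_ord o; rewrite /=; lia.
Qed.

Lemma phi_tX n : phi (a 1 ^+ n) = Posz n.
Proof.
elim: n => [|n IH]; first exact: phi1.
rewrite expgS hphi IH hphia //; lia.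
Qed.
Lemma phi_tVX n : phi ((a 1)^-1 ^+ n) = (- Posz n)%R.
Proof.
elim: n => [|n IH]; first exact: phi1.
rewrite expgS hphi IH phiV hphia //; lia.
Qed.

Lemma phi_surj z : exists g, phi g = z.
Proof.
case: z => n; first by exists (a 1 ^+ n); rewrite phi_tX.
by exists ((a 1)^-1 ^+ n.+1); rewrite phi_tVX NegzE.
Qed.

Lemma free_exists (H : groupType) (bb : 'I_(m + k) -> H) :
  exists f : G -> H, is_ghom_on (fun g => phi g = 0%R) f /\ forall o, f (xb o) = bb o.
Proof.
pose cc (l : nat) : H := if (insub l.-2 : option 'I_(m + k)) is Some o then bb o else 1.
pose A (l : nat) : Gam H := (gg m cc l, 1%R).
have hA : Gmk_relations m k A.
  split.
    move=> i /andP [hi1 hi2]; apply: comm_of.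
    apply: gam_comm => z.
    have := gg_rel m cc z hi1; rewrite /pidx hi2 //.
  move=> j /andP [hj1 hj2]; apply: conj_of.
  rewrite addn1; apply: gam_comm => z.
  have h1 : (1 <= m + j)%N by lia.
  have := gg_rel m cc z h1; rewrite /pidx.
  have -> : (m + j <= m)%N = false by lia.
  by rewrite addKn.
case: hG => _ /(_ _ _ hA) [[F [hF hFa]] _].
have hF2 : forall u, (F u).2 = phi u.
  pose h1 (u : G) : Gam H := (fun _ => 1, (F u).2).
  pose h2 (u : G) : Gam H := (fun _ => 1, phi u).
  have hh1 : is_ghom h1.
    move=> x y; rewrite /h1 hF gam_mulE /gam_mul /=; congr (_, _).
    by apply: funext => n; rewrite mulg1.
  have hh2 : is_ghom h2.
    move=> x y; rewrite /h2 hphi gam_mulE /gam_mul /=; congr (_, _).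
    by apply: funext => n; rewrite mulg1.
  case: hG => hrel /(_ _ _ (rel_hom hh2 hrel)) [_ hU].
  move=> u; have := hU h1 h2 hh1 hh2.
  have agree : forall i, (1 <= i <= m + k + 1)%N -> h1 (a i) = h2 (a i).
    by move=> i hi; rewrite /h1 /h2 hFa // hphia.
  by move=> /(_ agree u) /(congr1 snd).
exists (fun u => (F u).1 0%R); split.
  move=> x y hx hy /=; rewrite hF gam_mulE /gam_mul /= hF2 hx add0r //.
move=> o; rewrite /xb hF (ghomV _ hF) !hFa; try by (have := ltn_ord o; lia).
rewrite gam_mulE gam_invE /gam_mul /gam_inv /A /= gg_c //.
rewrite gg1 invg1 mulg1 /cc /=.
case: insubP => [o' _ /val_inj -> //|].
by rewrite ltn_ord.
Qed.

Inductive Tg : G -> Prop :=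
| Tg1 : Tg 1
| Tgx w o : Tg w -> Tg (w * xb o)
| Tgxv w o : Tg w -> Tg (w * (xb o)^-1).

Lemma TgM u v : Tg u -> Tg v -> Tg (u * v).
Proof.
move=> hu; elim=> [|w o _ IH|w o _ IH]; first by rewrite mulg1.
  by rewrite mulgA; apply: Tgx.
by rewrite mulgA; apply: Tgxv.
Qed.
Lemma TgV u : Tg u -> Tg u^-1.
Proof.
elim=> [|w o _ IH|w o _ IH]; first by rewrite invg1; apply: Tg1.
  rewrite invgM; apply: TgM => //; have := Tgxv o Tg1; by rewrite mul1g.
rewrite invgM invgK; apply: TgM => //; have := Tgx o Tg1; by rewrite mul1g.
Qed.

Definition yb l := a l * (a 1)^-1.
Lemma Tgy l : (1 <= l <= m + k + 1)%N -> Tg (yb l).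
Proof.
case: l => [//|[|l]] hl; first by rewrite /yb mulgV; apply: Tg1.
have hl' : (l < m + k)%N by lia.
have := Tgx (Ordinal hl') Tg1; by rewrite mul1g.
Qed.

Lemma rel_uni i : (1 <= i <= m + k)%N -> a (pidx m i) * a i.+1 = a i.+1 * a i.
Proof.
move=> hi; case: hG => [[h1 h2] _]; rewrite /pidx; case: ifP => him.
  apply: of_comm; apply: h1; lia.
have hj : (1 <= i - m <= k)%N by move/negbT: him; lia.
have := h2 _ hj; rewrite subnKC; last by move/negbT: him; lia.
by rewrite addn1 => /of_conj.
Qed.

Definition cf u := a 1 * u * (a 1)^-1.
Definition cb u := (a 1)^-1 * u * a 1.
Lemma cfM u v : cf (u * v) = cf u * cf v. Proof. by rewrite /cf !mulgA mulgVK. Qed.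
Lemma cbM u v : cb (u * v) = cb u * cb v. Proof. by rewrite /cb !mulgA mulgK. Qed.
Lemma cfV u : cf u^-1 = (cf u)^-1. Proof. by rewrite /cf !invgM invgK !mulgA. Qed.
Lemma cbV u : cb u^-1 = (cb u)^-1. Proof. by rewrite /cb !invgM invgK !mulgA. Qed.

Lemma Tcfy l : (1 <= l <= m + k + 1)%N -> Tg (cf (yb l)) /\ Tg (cb (yb l)).
Proof.
elim/ltn_ind: l => -[//|[|i]] IH hl.
  by rewrite /yb /cf /cb mulgV mulg1 mulgV mulg1 mulVg; split; apply: Tg1.
have hi : (1 <= i.+1 <= m + k)%N by lia.
have E := rel_uni hi.
have hp1 := pidx_ge1 m (isT : (1 <= i.+1)%N).
have hp2 := pidx_le m i.+1.
split.
  rewrite /cf /yb (ident1 _ E); apply: TgM; first apply: TgM.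
  - apply: TgV; apply: Tgy; lia.
  - apply: Tgy; lia.
  - exact: (IH i.+1 (ltnSn _) ltac:(lia)).1.
rewrite /cb /yb (ident2 _ E); apply: TgM; first apply: TgM.
- exact: (IH (pidx m i.+1) ltac:(lia) ltac:(lia)).2.
- apply: Tgy; lia.
- apply: TgV; apply: Tgy; lia.
Qed.

Lemma Tcf u : Tg u -> Tg (cf u) /\ Tg (cb u).
Proof.
elim=> [|w o _ [IH1 IH2]|w o _ [IH1 IH2]].
- by rewrite /cf /cb !mulg1 mulgV mulVg; split; apply: Tg1.
- have := Tcfy (l := o.+2); rewrite /yb -/(xb o) => /(_ ltac:(have := ltn_ord o; lia)) [h1 h2].
  by rewrite cfM cbM; split; apply: TgM.
- have := Tcfy (l := o.+2); rewrite /yb -/(xb o) => /(_ ltac:(have := ltn_ord o; lia)) [h1 h2].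
  by rewrite cfM cbM cfV cbV; split; apply: TgM => //; apply: TgV.
Qed.

Definition Eg (e : G) := forall u, Tg u -> Tg (e * u * e^-1).
Definition Qg (e : G) := exists n, e = a 1 ^+ n \/ e = (a 1)^-1 ^+ n.
Definition Sg (u : G) := exists w e, [/\ Tg w, Eg e, Qg e & u = w * e].

Lemma Eg_t e : Eg e -> Eg (e * a 1).
Proof.
move=> hE u hu; have -> : e * a 1 * u * (e * a 1)^-1 = e * cf u * e^-1.
  by rewrite /cf invgM !mulgA.
by apply: hE; case: (Tcf hu).
Qed.
Lemma Eg_tv e : Eg e -> Eg (e * (a 1)^-1).
Proof.
move=> hE u hu; have -> : e * (a 1)^-1 * u * (e * (a 1)^-1)^-1 = e * cb u * e^-1.
  by rewrite /cb invgM invgK !mulgA.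
by apply: hE; case: (Tcf hu).
Qed.
Lemma Qg_t e : Qg e -> Qg (e * a 1).
Proof.
case=> n [->|->].
  by exists n.+1; left; rewrite expgSr.
case: n => [|n]; first by exists 1%N; left; rewrite mul1g.
by exists n; right; rewrite expgSr mulgVK.
Qed.
Lemma Qg_tv e : Qg e -> Qg (e * (a 1)^-1).
Proof.
case=> n [->|->].
  case: n => [|n]; first by exists 1%N; right; rewrite mul1g.
  by exists n; left; rewrite expgSr mulgK.
by exists n.+1; right; rewrite expgSr.
Qed.

Lemma Sg_all u : Sg u.
Proof.
apply: (gen_ind hG) => [|{}u i hi [w [e [hw hE hQ ->]]]].
  exists 1, 1; split; first exact: Tg1.
  - by move=> v hv; rewrite invg1 !mulg1 mul1g.
  - by exists 0%N; left.
  - by rewrite mulg1.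
have ha : a i = yb i * a 1 by rewrite /yb mulgVK.
split.
  exists (w * (e * yb i * e^-1)), (e * a 1); split.
  - by apply: TgM => //; apply: hE; apply: Tgy.
  - exact: Eg_t.
  - exact: Qg_t.
  - by rewrite ha ident3.
exists (w * ((e * (a 1)^-1) * (yb i)^-1 * (e * (a 1)^-1)^-1)), (e * (a 1)^-1); split.
- by apply: TgM => //; apply: Eg_tv => //; apply: TgV; apply: Tgy.
- exact: Eg_tv.
- exact: Qg_tv.
- by rewrite ha ident4.
Qed.

Lemma phiTg w : Tg w -> phi w = 0%R.
Proof.
elim=> [|{}w o _ IH|{}w o _ IH]; first exact: phi1.
  by rewrite hphi IH phixb.
by rewrite hphi IH phiV phixb.
Qed.

Lemma NtoT u : phi u = 0%R -> Tg u.
Proof.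
have [w [e [hw _ [n hn] ->]]] := Sg_all u.
rewrite hphi phiTg // add0r => he.
have : e = 1.
  case: hn => hn; rewrite hn ?phi_tX ?phi_tVX in he *; case: n {hn} he => // n' he; lia.
by move=> ->; rewrite mulg1.
Qed.

Lemma free_unique (H : groupType) (f g : G -> H) :
  is_ghom_on (fun g => phi g = 0%R) f -> is_ghom_on (fun g => phi g = 0%R) g ->
  (forall o, f (xb o) = g (xb o)) -> forall u, phi u = 0%R -> f u = g u.
Proof.
have hon1 (h : G -> H) : is_ghom_on (fun g => phi g = 0%R) h -> h 1 = 1.
  move=> hh; have := hh 1 1 phi1 phi1; rewrite mulg1 => e.
  by apply: (@mulgI _ (h 1)); rewrite mulg1 -e.
have honV (h : G -> H) x : is_ghom_on (fun g => phi g = 0%R) h -> phi x = 0%R ->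
    h x^-1 = (h x)^-1.
  move=> hh hx; apply/esym/mulg1_eq; rewrite -hh ?mulgV ?hon1 // phiV hx; lia.
move=> hf hg hfg u /NtoT; elim=> [|w o hw IH|w o hw IH].
- by rewrite !hon1.
- have hw0 := phiTg hw.
  by rewrite (hf _ _ hw0 (phixb o)) (hg _ _ hw0 (phixb o)) IH hfg.
- have hx : phi (xb o)^-1 = 0%R by rewrite phiV phixb.
  have hw0 := phiTg hw.
  by rewrite (hf _ _ hw0 hx) (hg _ _ hw0 hx) IH !honV ?phixb // hfg.
Qed.

End Main.


Local Close Scope group_scope.

Theorem proposition5p3 (m k : nat) (hm : (1 <= m)%N) (hk : (k <= m)%N)
    (G : groupType) (a : nat -> G) (hG : presents_Gmk m k a) :
  (* the induced map f_* : G_{m,k} -> Z sending every a_i to 1 exists *)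
  (exists phi : G -> int,
      (forall x y : G, phi (x * y)%g = (phi x + phi y)%R) /\
      (forall i, (1 <= i <= m + k + 1)%N -> phi (a i) = 1%R)) /\
  (* and for it, 1 -> F_{m+k} -> G_{m,k} -> Z -> 1 is exact *)
  (forall phi : G -> int,
      (forall x y : G, phi (x * y)%g = (phi x + phi y)%R) ->
      (forall i, (1 <= i <= m + k + 1)%N -> phi (a i) = 1%R) ->
      (forall z : int, exists g : G, phi g = z) /\
      exists x : 'I_(m + k) -> G,
        free_basis_of (fun g : G => phi g = 0%R) x).
Proof.
split.
  pose X : Gam G := (fun _ => 1%g, 1%R).
  have hb : Gmk_relations m k (fun _ : nat => X).
    by split => [i _|j _]; [apply: comm_of | apply: conj_of].
  case: hG => _ /(_ _ _ hb) [[F [hF hFa]] _].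
  exists (fun u => (F u).2); split; first by move=> x y; rewrite hF.
  by move=> i hi; rewrite hFa.
move=> phi hphi hphia; split; first exact: (phi_surj hphi hphia).
exists (xb a); split; first by move=> o; apply: phixb.
move=> H bb; split; first exact: (free_exists hG hphi hphia).
move=> f g hf hg hfg u hu; exact: (free_unique hG hphi hphia hf hg hfg).
Qed.
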